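(* Let $\mathcal F$, $\mathcal B$, $\mathcal D$, $\mathrm{Bo}$, $S$, $\widehat S$ and $M$ be as in the context, and take $f=\omega\xi$ in the definition of $S$. If $(\omega,\xi,\Phi)$ is a solution of the ice-fishing problem (IFP) below, then $(\omega^2,\xi)$ solves $$\xi-\frac{1}{\mathrm{Bo}}(I-M)\Delta_{\mathcal F}\xi=\omega^2(I-M)\widehat S\xi\ \text{ on }\mathcal F,\qquad \partial_{\mathbf n_{\mathcal F}}\xi=0\ \text{ on }\partial\mathcal F,\qquad \int_{\mathcal F}\xi\,dA=0. \quad (\ast)$$ Moreover, if $(\omega^2,\xi)$ is a solution of $(\ast)$ and we define $$\Phi=\omega S\xi-\omega M\widehat S\xi-\frac{1}{\omega\,\mathrm{Bo}}M\Delta\xi,$$ then $(\omega,\xi,\Phi)$ is a solution of the IFP.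
   Context: Coordinates $\mathbf x=(x,y,z)\in\mathbb R^3$. The fluid domain is $\mathcal D=\{z<0\}$. The free surface $\mathcal F$ is either the infinite parallel strip $\{|x|<1,z=0\}$ (with $\mathcal B=\{|x|>1,z=0\}$, $\partial\mathcal F=\{|x|=1,z=0\}$) or the circular hole $\{|(x,y)|<1,z=0\}$ (with $\mathcal B=\{|(x,y)|>1,z=0\}$, $\partial\mathcal F=\{|(x,y)|=1,z=0\}$). $\mathrm{Bo}>0$ is the Bond number, $\Delta_{\mathcal F}$ is the Laplacian on the free surface and $\partial_{\mathbf n_{\mathcal F}}$ the derivative in the direction normal to $\partial\mathcal F$ within the plane $z=0$. The IFP is the problem of finding $(\omega,\Phi,\xi)$ with $\Delta\Phi=0$ in $\mathcal D$; $\partial_z\Phi=0$ on $\mathcal B$; $\partial_z\Phi=\omega\xi$ on $\mathcal F$; $\xi-\frac{1}{\mathrm{Bo}}\Delta_{\mathcal F}\xi=\omega\Phi$ on $\mathcal F$; $\partial_{\mathbf n_{\mathcal F}}\xi=0$ on $\partial\mathcal F$; $\int_{\mathcal F}\xi\,dA=0$. Operator $S$: for Neumann data $f$ on $\mathcal F$, $S$ is the operator such that the solution $\Phi$ of $\Delta\Phi=0$ in $\mathcal D$, $\partial_z\Phi=f\chi_{\mathcal F}$ on $\{z=0\}$ can be written $\Phi=S[f\chi_{\mathcal F}]+\Phi_\infty$ with $\Phi_\infty$ a constant and $S f(\mathbf x)\to 0$ as $|\mathbf x|\to\infty$. $\widehat S$ denotes the restriction of $S$ to $z=0$. $M$ is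 the mean value operator $Mf=\frac{1}{|\mathcal F|}\int_{\mathcal F}f\,dA$, and $I$ is the identity. *)

(* Defs.v *)
From HB Require Import structures.
From mathcomp Require Import all_boot all_order all_algebra.
From mathcomp Require Import all_classical all_reals all_analysis.
Unset Printing Implicit Defensive.
Import Order.TTheory GRing.Theory Num.Theory.
Import numFieldNormedType.Exports.
Local Open Scope classical_set_scope.
Local Open Scope ring_scope.

(* A geometry of the free surface: horizontal coordinate space [surf],
   an orthonormal coordinate basis [dirs] of it, the free surface F, the
   rest B of the plane z = 0, the boundary dF of F, the outward unit normal
   on dF, the integral over F (dA), integrability on F and |F|. *)
Record geometry (R : realType) := Geometry {
  surf : normedModType R;
  dirs : seq surf;
  Fset : set surf;
  Bset : set surf;
  dFset : set surf;
  normalF : surf -> surf;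
  integF : (surf -> R) -> R;
  integrableF : (surf -> R) -> Prop;
  areaF : R }.
Arguments surf {R}. Arguments dirs {R}. Arguments Fset {R}. Arguments Bset {R}.
Arguments dFset {R}. Arguments normalF {R}. Arguments integF {R}.
Arguments integrableF {R}. Arguments areaF {R}.

(* The strip: cross-section (x,z), free surface |x| < 1. *)
Definition strip_geom (R : realType) : geometry R :=
  @Geometry R R^o [:: (1 : R^o)]
    [set x : R^o | `|x| < 1] [set x : R^o | 1 < `|x|] [set x : R^o | `|x| = 1]
    (fun x => x)
    (fun f => Rintegral (@lebesgue_measure R) [set x : R | `|x| < 1] (fun x => f x))
    (fun f => (@lebesgue_measure R).-integrable [set x : R | `|x| < 1]
                 (fun x => (f x)%:E))
    (fine (@lebesgue_measure R [set x : R | `|x| < 1])).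

Definition disk (R : realType) : set (R * R) := [set p | p.1 ^+ 2 + p.2 ^+ 2 < 1].

Definition hole_geom (R : realType) : geometry R :=
  @Geometry R (R^o * R^o)%type [:: ((1 : R^o), (0 : R^o)); ((0 : R^o), (1 : R^o))]
    (disk R) [set p | 1 < p.1 ^+ 2 + p.2 ^+ 2] [set p | p.1 ^+ 2 + p.2 ^+ 2 = 1]
    (fun p => p)
    (fun f => Rintegral ((@lebesgue_measure R) \x (@lebesgue_measure R))%E (disk R)
                 (fun p => f p))
    (fun f => ((@lebesgue_measure R) \x (@lebesgue_measure R))%E.-integrable (disk R)
                 (fun p => (f p)%:E))
    (fine (((@lebesgue_measure R) \x (@lebesgue_measure R))%E (disk R))).

Section Defs.
Context {R : realType} (G : geometry R).

(* points of the fluid region: (horizontal coordinates, z) *)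
Definition pt := (surf G * R^o)%type.
Definition Dset : set pt := [set p | p.2 < 0].
Definition Dclos : set pt := [set p | p.2 <= 0].
Definition ez : pt := (0, 1).
Definition dirs3 : seq pt := [seq (u, 0) | u <- dirs G] ++ [:: ez].

Definition MF (f : surf G -> R) : R := integF G f / areaF G.

Definition LapF (xi : surf G -> R) (h : surf G) : R :=
  \sum_(u <- dirs G) 'D_u ('D_u xi) h.

Definition Lap3 (Phi : pt -> R) (p : pt) : R :=
  \sum_(e <- dirs3) 'D_e ('D_e Phi) p.

Definition harmonic_on (A : set pt) (Phi : pt -> R) :=
  forall p, A p ->
    (forall e, e \in dirs3 -> derivable Phi p e /\ derivable ('D_e Phi) p e) /\
    Lap3 Phi p = 0.

Definition admissible_pot (Phi : pt -> R) :=
  harmonic_on Dset Phi /\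
  (exists C, forall p, Dset p -> `|Phi p| <= C) /\
  {within Dclos, continuous Phi}.

Definition neumann_sol (Phi : pt -> R) (g : surf G -> R) :=
  admissible_pot Phi /\
  forall h, Fset G h \/ Bset G h ->
    'D_ez Phi @ within Dset (nbhs ((h, 0) : pt)) --> g h.

Definition chiF (f : surf G -> R) (h : surf G) : R := (\1_(Fset G) h : R) * f h.

Definition decays (Phi : pt -> R) :=
  forall eps : R, 0 < eps -> exists K : R,
    forall p, Dset p -> K < `|p| -> `|Phi p| < eps.

Definition surf_regular (xi : surf G -> R) :=
  (exists U : set (surf G), open U /\ closure (Fset G) `<=` U /\
    forall h, U h -> differentiable xi h /\
      forall u, u \in dirs G ->
        {for h, continuous ('D_u xi)} /\ derivable ('D_u xi) h u) /\
  integrableF G xi /\ integrableF G (LapF xi).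

Definition data_class (f : surf G -> R) := surf_regular f /\ integF G f = 0.

Definition is_S (S : (surf G -> R) -> pt -> R) :=
  forall f, data_class f ->
    [/\ neumann_sol (S f) (chiF f), decays (S f) &
        forall Phi, neumann_sol Phi (chiF f) ->
          exists c : R, forall p, Dclos p -> Phi p = S f p + c].

Definition Shat (S : (surf G -> R) -> pt -> R) (f : surf G -> R) (h : surf G) : R :=
  S f (h, 0).

Definition IFP (Bo om : R) (Phi : pt -> R) (xi : surf G -> R) :=
  [/\ neumann_sol Phi (chiF (fun h => om * xi h)),
      surf_regular xi,
      forall h, Fset G h -> xi h - Bo^-1 * LapF xi h = om * Phi (h, 0),
      forall h, dFset G h -> 'D_(normalF G h) xi h = 0 &
      integF G xi = 0].

Definition star_problem (Bo : R) (S : (surf G -> R) -> pt -> R) (lam : R)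
    (xi : surf G -> R) :=
  [/\ surf_regular xi,
      forall h, Fset G h ->
        xi h - Bo^-1 * (LapF xi h - MF (LapF xi))
          = lam * (Shat S xi h - MF (Shat S xi)),
      forall h, dFset G h -> 'D_(normalF G h) xi h = 0 &
      integF G xi = 0].

End Defs.

(* Main.v *)
Require Import Defs.
From HB Require Import structures.
From mathcomp Require Import all_boot all_order all_algebra.
From mathcomp Require Import all_classical all_reals all_analysis.
From mathcomp Require Import ring lra.
Import Order.TTheory GRing.Theory Num.Theory.
Import numFieldNormedType.Exports.
Local Open Scope classical_set_scope.
Local Open Scope ring_scope.
Section D.
Context {R : realType} {V : normedModType R}.

Let smE (x y : R) : x *: y = x * y. Proof. by []. Qed.

Lemma quotE (f : V -> R) (k c : R) (a v : V) :
  (fun h : R => h^-1 *: (((fun p => k * f p + c) \o shift a) (h *: v) - (k * f a + c)))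
  = k *: (fun h : R => h^-1 *: ((f \o shift a) (h *: v) - f a)).
Proof. rewrite scalrfctE; apply/funext => h; rewrite !smE /=; ring. Qed.
Lemma derivable_aff (f : V -> R) (k c : R) (a v : V) : k != 0 ->
  derivable (fun p => k * f p + c) a v = derivable f a v.
Proof. by move=> k0; rewrite /derivable quotE is_cvgZlE. Qed.
Lemma lim_nocvg (g : R -> R) : ~ cvg (g @ 0^') -> lim (g @ 0^') = 0.
Proof.
move=> ng; rewrite /lim /lim_in getPN // => l hl; apply: ng.
by apply/cvg_ex; exists l.
Qed.
Lemma derive_aff (f : V -> R) (k c : R) (a v : V) : k != 0 ->
  derive (fun p => k * f p + c) a v = k * derive f a v.
Proof.
move=> k0; rewrite /derive quotE.
set q := (fun h : R => _).
have [cf|ncf] := pselect (cvg (q @ 0^')).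
  by rewrite limZl_tmp.
rewrite (@lim_nocvg q ncf).
rewrite (@lim_nocvg (k *: q)) ?mulr0 //.
by rewrite is_cvgZlE.
Qed.

Lemma derivable_scale (f : V -> R) (k : R) (a v : V) : k != 0 ->
  derivable (fun p => k * f p) a v = derivable f a v.
Proof.
move=> k0; have -> : (fun p => k * f p) = (fun p => k * f p + 0).
  by apply/funext => p; rewrite addr0.
exact: derivable_aff.
Qed.

Lemma derive_scale (f : V -> R) (k : R) (a v : V) : k != 0 ->
  derive (fun p => k * f p) a v = k * derive f a v.
Proof.
move=> k0; have -> : (fun p => k * f p) = (fun p => k * f p + 0).
  by apply/funext => p; rewrite addr0.
exact: derive_aff.
Qed.

Lemma D_aff (f : V -> R) (k c : R) (v : V) : k != 0 ->
  (fun q => derive (fun p => k * f p + c) q v) = (fun q => k * derive f q v).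
Proof. by move=> k0; apply/funext => q; exact: derive_aff. Qed.
End D.
Section gen.
Context {R : realType} d (T : measurableType d) (mu : {measure set T -> \bar R}) (D : set T).
Hypotheses (mD : measurable D) (finD : (mu D < +oo)%E).

Lemma gen_cst (c : R) : mu.-integrable D (fun x => c%:E).
Proof.
apply/integrableP; split; first exact: measurable_cst.
have := integral_cst mu mD (`|c%:E|)%E; rewrite /cst => ->.
by rewrite lte_mul_pinfty.
Qed.

Lemma gen_lin (f1 f2 : T -> R) (a b c : R) :
  mu.-integrable D (fun x => (f1 x)%:E) -> mu.-integrable D (fun x => (f2 x)%:E) ->
  mu.-integrable D (fun x => (a * f1 x + b * f2 x + c)%:E) /\
  Rintegral mu D (fun x => a * f1 x + b * f2 x + c) =
    a * Rintegral mu D f1 + b * Rintegral mu D f2 + c * fine (mu D).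
Proof.
move=> i1 i2.
have j1 : mu.-integrable D (fun x => (a * f1 x)%:E).
  by apply: eq_integrable mD _ _ _ (integrableZl mD a i1) => x _.
have j2 : mu.-integrable D (fun x => (b * f2 x)%:E).
  by apply: eq_integrable mD _ _ _ (integrableZl mD b i2) => x _.
have j12 : mu.-integrable D (fun x => (a * f1 x + b * f2 x)%:E).
  by apply: eq_integrable mD _ _ _ (integrableD mD j1 j2) => x _.
split.
  by apply: eq_integrable mD _ _ _ (integrableD mD j12 (gen_cst c)) => x _.
rewrite RintegralD //; last exact: gen_cst.
rewrite RintegralD // RintegralZl // RintegralZl // Rintegral_cst //.
Qed.

Lemma gen_eq (f g : T -> R) : (forall x, D x -> f x = g x) ->
  Rintegral mu D f = Rintegral mu D g.
Proof. by move=> fg; apply: eq_Rintegral => x /set_mem /fg. Qed.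

Lemma gen_eqi (f g : T -> R) : (forall x, D x -> f x = g x) ->
  mu.-integrable D (fun x => (f x)%:E) -> mu.-integrable D (fun x => (g x)%:E).
Proof. by move=> fg i; apply: eq_integrable mD _ _ _ i => x /set_mem /fg ->. Qed.
End gen.

Definition good {R : realType} (G : geometry R) : Prop :=
  [/\ areaF G != 0,
      (forall f g, (forall h, Fset G h -> f h = g h) -> integF G f = integF G g),
      (forall f g, (forall h, Fset G h -> f h = g h) -> integrableF G f -> integrableF G g) &
      (forall f1 f2 (a b c : R), integrableF G f1 -> integrableF G f2 ->
        integrableF G (fun h => a * f1 h + b * f2 h + c) /\
        integF G (fun h => a * f1 h + b * f2 h + c) =
          a * integF G f1 + b * integF G f2 + c * areaF G)].



Lemma strip_good (R : realType) : good (strip_geom R).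
Proof.
set mu := @lebesgue_measure R.
set D := [set x : R | `|x| < 1].
have DE : D = [set` `](-1), 1[%R].
  by rewrite predeqE => x /=; rewrite in_itv /= /D /= ltr_norml.
have mD : measurable D by rewrite DE; exact: measurable_itv.
have muD : mu D = 2%:E.
  rewrite DE /mu lebesgue_measure_itv /= ifT; last by rewrite lte_fin; lra.
  by rewrite -EFinB; congr EFin; lra.
have finD : (mu D < +oo)%E by rewrite muD ltry.
split => /=.
- change (fine (mu D) != 0). by rewrite muD /= pnatr_eq0.
- by move=> f g fg; apply: gen_eq.
- by move=> f g fg; apply: gen_eqi.
- by move=> f1 f2 a b c i1 i2; apply: gen_lin.
Qed.

Lemma hole_good (R : realType) : good (hole_geom R).
Proof.
set mu := ((@lebesgue_measure R) \x (@lebesgue_measure R))%E.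
set D := disk R.
have mD : measurable D.
  have mphi : measurable_fun setT (fun p : R * R => p.1 ^+ 2 + p.2 ^+ 2).
    apply: measurable_realfun.measurable_funD; apply: measurable_realfun.measurable_funX.
      exact: measurable_fst.
    exact: measurable_snd.
  have := mphi measurableT _ (measurable_itv `]-oo, 1[%R).
  rewrite setTI; congr measurable.
have mI : forall a : R, measurable [set` `](- a), a[%R] by move=> a; exact: measurable_itv.
have muI : forall a : R, 0 < a -> lebesgue_measure [set` `](- a), a[%R] = (a *+ 2)%:E.
  move=> a a0; rewrite lebesgue_measure_itv /= ifT; last by rewrite lte_fin; lra.
  by rewrite -EFinB; congr EFin; lra.
have sq : forall a : R, 0 < a -> mu ([set` `](- a), a[%R] `*` [set` `](- a), a[%R]) = ((a *+ 2) * (a *+ 2))%:E.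
  move=> a a0; rewrite /mu product_measure1E // EFinM; congr (_ * _)%E; exact: muI.
have up : (mu D <= ((1 *+ 2) * (1 *+ 2))%:E)%E.
  rewrite -sq //; apply: le_measure; rewrite ?inE //; first exact: measurableX.
  move=> [x y]; rewrite /D /disk /= !in_itv /= => h.
  split; apply/andP; split; nra.
have lo : ((((1/2) *+ 2) * ((1/2) *+ 2))%:E <= mu D)%E.
  have hh : (0:R) < 1/2 by lra.
  rewrite -(sq _ hh); apply: le_measure; rewrite ?inE //; first exact: measurableX.
  move=> [x y]; rewrite /D /disk /= !in_itv /= => -[/andP[h1 h2] /andP[h3 h4]].
  nra.
have finD : (mu D < +oo)%E by apply: le_lt_trans up _; rewrite ltry.
have pos : 0 < fine (mu D).
  have f0 : mu D \is a fin_num by rewrite ge0_fin_numE // measure_ge0.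
  rewrite -(fineK f0) lee_fin in lo.
  by apply: lt_le_trans lo; lra.
split => /=.
- by change (fine (mu D) != 0); rewrite gt_eqF.
- by move=> f g fg; apply: gen_eq.
- by move=> f g fg; apply: gen_eqi.
- by move=> f1 f2 a b c i1 i2; apply: gen_lin.
Qed.
Section Neu.
Context {R : realType} (G : geometry R).

Lemma neumann_aff (Phi : pt G -> R) (g : surf G -> R) (k c : R) : k != 0 ->
  neumann_sol G Phi g -> neumann_sol G (fun p => k * Phi p + c) (fun h => k * g h).
Proof.
move=> k0 [[hh [[C hC] hc]] hl]; split; [split; [|split]|].
- move=> p Dp; have [hd hL] := hh p Dp; split.
    move=> e he; have [d1 d2] := hd e he; split; first by rewrite derivable_aff.
    by rewrite D_aff // derivable_scale.
  rewrite /Lap3 (eq_bigr (fun e => k * derive (fun x => derive Phi x e) p e)); last first.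
    by move=> e _; rewrite D_aff // derive_scale.
  by rewrite -big_distrr /= -/(Lap3 G Phi p) hL mulr0.
- exists (`|k| * C + `|c|) => p Dp.
  apply: le_trans (ler_normD _ _) _; rewrite lerD2r normrM.
  by apply: ler_wpM2l => //; exact: hC.
- move=> x; apply: cvgD; last exact: cvg_cst.
  by apply: cvgMl_tmp; exact: hc.
- move=> h hFB; rewrite D_aff //.
  by apply: cvgMl_tmp; exact: hl.
Qed.
End Neu.

Lemma geom_good (R : realType) (G : geometry R) :
  G = strip_geom R \/ G = hole_geom R -> good G.
Proof. by case=> ->; [exact: strip_good | exact: hole_good]. Qed.

Theorem mainTheorem2 (R : realType) (G : geometry R)
  (HG : G = strip_geom R \/ G = hole_geom R)
  (Bo : R) (HBo : 0 < Bo) (S : (surf G -> R) -> pt G -> R) (HS : is_S G S) :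
  (forall (om : R) (Phi : pt G -> R) (xi : surf G -> R),
      IFP G Bo om Phi xi -> star_problem G Bo S (om ^+ 2) xi) /\
  (forall (om : R) (xi : surf G -> R), om != 0 ->
      star_problem G Bo S (om ^+ 2) xi ->
      IFP G Bo om
        (fun p => om * S xi p - om * MF G (Shat G S xi)
                  - (om * Bo)^-1 * MF G (LapF G xi)) xi).
Proof.
have [A0 eqI eqIi lin] := @geom_good R G HG.
have Bo0 : Bo != 0 by rewrite gt_eqF.
split.
- move=> om Phi xi [ns reg eqF bd int].
  have ireg : integrableF G xi /\ integrableF G (LapF G xi) by case: reg => _ [].
  case: ireg => ixi iL.
  split => // h Fh.
  have [om0|om0] := eqVneq om 0.
    have hF : forall h, Fset G h -> xi h - Bo^-1 * LapF G xi h = 0.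
      by move=> h' Fh'; rewrite eqF // om0 mul0r.
    have I0 : integF G (fun h => 1 * xi h + (- Bo^-1) * LapF G xi h + 0)
            = integF G (fun h => 0 * xi h + 0 * xi h + 0).
      by apply: eqI => h' Fh'; rewrite !mul0r !addr0 mul1r mulNr hF.
    have [_ E1] := lin _ _ 1 (- Bo^-1) 0 ixi iL.
    have [_ E2] := lin _ _ 0 0 0 ixi ixi.
    rewrite E1 E2 int !mul0r mulr0 !addr0 add0r in I0.
    have IL : integF G (LapF G xi) = 0.
      by move/eqP: I0; rewrite mulNr oppr_eq0 mulf_eq0 invr_eq0 (negbTE Bo0) /= => /eqP.
    rewrite /MF IL mul0r subr0 om0 expr0n /= mul0r.
    by rewrite (hF h Fh).
  have dc : data_class G xi by split.
  have [_ _ uniq] := HS xi dc.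
  have ns' : neumann_sol G (fun p => om^-1 * Phi p + 0) (chiF G xi).
    have -> : chiF G xi = (fun h => om^-1 * chiF G (fun h => om * xi h) h).
      by apply/funext => hh; rewrite /chiF; field.
    exact: neumann_aff (invr_neq0 om0) ns.
  have [c hc] := uniq _ ns'.
  have PhiE : forall h, Phi (h, 0) = om * (S xi (h, 0) + c).
    move=> h'; rewrite -hc; last by rewrite /Dclos /=.
    by rewrite addr0; field.
  have ShE : forall h, Fset G h ->
      Shat G S xi h = om^-2 * xi h + (- (om^-2 * Bo^-1)) * LapF G xi h + (- c).
    move=> h' Fh'; have := eqF h' Fh'; rewrite PhiE /Shat => e.
    rewrite /Shat.
    have -> : S xi (h', 0) = om^-2 * (om * (om * (S xi (h', 0) + c))) - c.
      by field.
    by rewrite -e; field; rewrite Bo0 om0.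
  have [_ EL] := lin _ _ (om^-2) (- (om^-2 * Bo^-1)) (- c) ixi iL.
  have ISh : integF G (Shat G S xi) =
      om^-2 * integF G xi + (- (om^-2 * Bo^-1)) * integF G (LapF G xi) + (- c) * areaF G.
    by rewrite -EL; apply: eqI.
  rewrite /MF ISh int (ShE h Fh).
  by field; rewrite A0 om0 Bo0.
- move=> om xi om0 [reg eqF bd int].
  have dc : data_class G xi by split.
  have [ns _ _] := HS xi dc.
  set c' := - (om * MF G (Shat G S xi)) - (om * Bo)^-1 * MF G (LapF G xi).
  have -> : (fun p => om * S xi p - om * MF G (Shat G S xi)
                  - (om * Bo)^-1 * MF G (LapF G xi)) = (fun p => om * S xi p + c').
    by apply/funext => p; rewrite /c' !addrA.
  split => //.
  + have -> : chiF G (fun h => om * xi h) = (fun h => om * chiF G xi h).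
      by apply/funext => h; rewrite /chiF mulrCA.
    exact: neumann_aff.
  + move=> h Fh; have := eqF h Fh; rewrite /Shat /c' => e.
    have -> : xi h - Bo^-1 * LapF G xi h =
        om ^+ 2 * (S xi (h, 0) - MF G (Shat G S xi)) - Bo^-1 * MF G (LapF G xi).
      by rewrite -e; ring.
    by field; rewrite om0 Bo0.
Qed.
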